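(* Let $G=\mathrm{PSL}(2,q)$ with $q$ an odd prime power, let $r,t$ be distinct primes with $q\equiv\pm1\pmod{2rt}$, and let $\varepsilon\in\mathrm{VPA}_{rt}(G)$. Then $t$ divides $\widetilde{\varepsilon}_1(t)$ and $r$ divides $\widetilde{\varepsilon}_1(r)$.
   Context: $\zeta_k$ denotes a complex primitive $k$-th root of unity; $\mathrm{Tr}_{F/K}$ is the trace map; $\sum_{x^G}$ is a sum over representatives of conjugacy classes of $G$; Brauer characters modulo a prime are w.r.t. a sufficiently large modular system. $\mathrm{VPA}_n(G)$ is the set of lists $\varepsilon=(\varepsilon_d)_{d\mid n}$ of integer-valued class functions of $G$ indexed by positive divisors of $n$ such that: (V1) $\sum_{x^G}\varepsilon_d(x)=1$ for each $d$; (V2) $\varepsilon_d(1)=0$ if $d\ne n$; (V3) $\varepsilon_d(x)=0$ if $|x|$ does not divide $n/d$; (V4) for every ordinary character $\chi$ of $G$ or Brauer character $\chi$ of $G$ modulo a prime not dividing $n$ and every $l\in\mathbb{Z}$, $\frac1n\sum_{x^G}\sum_{d\mid n}\varepsilon_d(x)\mathrm{Tr}_{\mathbb{Q}(\zeta_n^d)/\mathbb{Q}}(\chi(x)\zeta_n^{-ld})$ is a non-negative integer. The accumulated virtual partial augmentation is $\widetilde{\varepsilon}_d(m)=\sum\varepsilon_d(g)$, summed over representatives $g$ of the conjugacy classes of elements of $G$ of order $m$. *)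

(* Defs.v *)
From HB Require Import structures.
From mathcomp Require Import all_boot all_order all_algebra all_fingroup all_solvable all_field all_character.
Set Implicit Arguments. Unset Strict Implicit. Unset Printing Implicit Defensive.
Import Order.TTheory GRing.Theory Num.Theory.
Local Open Scope ring_scope.

Definition SL2_set (F : finFieldType) : {set {'GL_2[F]}} :=
  [set g : {'GL_2[F]} | \det (GLval g) == 1].

Lemma SL2_group_set (F : finFieldType) : group_set (SL2_set F).
Proof.
apply/group_setP; split; first by rewrite inE GL_1E det1.
by move=> x y; rewrite !inE GL_ME det_mulmx => /eqP-> /eqP->; rewrite mulr1.
Qed.

Canonical SL2 (F : finFieldType) : {group {'GL_2[F]}} := Group (SL2_group_set F).

Definition PSL2_type (F : finFieldType) := coset_of 'Z(SL2 F).
Definition PSL2 (F : finFieldType) : {group PSL2_type F} := (SL2 F / 'Z(SL2 F))%G.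

(* Qn_aut k m is an automorphism of algC sending every m-th root of unity
   z to z^k when k is coprime to m (restricting to the element
   sigma_k of Gal(Q(zeta_m)/Q)). *)
Definition Qn_aut (k m : nat) : {rmorphism algC -> algC} :=
  match coprime k m as b return coprime k m = b -> {rmorphism algC -> algC} with
  | true => fun h => sval (Qn_aut_exists h)
  | false => fun _ => sval (Qn_aut_exists (coprime1n m))
  end erefl.

(* Tr_{Q(zeta_m)/Q}(z) = sum over Gal(Q(zeta_m)/Q) = {sigma_k | k in (Z/m)^x},
   meaningful for z in Q(zeta_m). *)
Definition cycloTr (m : nat) (z : algC) : algC :=
  \sum_(k < m | coprime k m) Qn_aut k m z.

Section Brauer.
Variable gT : finGroupType.

(* Brauer value of a representation over a finite field k, using the lift
   lam : k^x -> C^x of (p'-)roots of unity: sum of lifted eigenvalues with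
   multiplicities (dimension of eigenspaces). *)
Definition brauer_val (k : finFieldType) (lam : k -> algC) (G : {group gT}) m
    (rG : mx_representation k G m) (x : gT) : algC :=
  \sum_(a : k | a != 0) (\rank (eigenspace (rG x) a))%:R * lam a.

(* chi is a Brauer character of G modulo the prime p (w.r.t. a sufficiently
   large modular system): it is afforded, on p-regular elements, by a
   representation over a finite field k of characteristic p containing
   all |G|_{p'}-th roots of unity, via an injective homomorphism lam
   from k^x (a group of p'-roots of unity) to C^x. *)
Definition is_brauer_char (G : {group gT}) (p : nat) (chi : gT -> algC) : Prop :=
  exists (k : finFieldType) (lam : k -> algC) (m : nat)
         (rG : mx_representation k G m),
    [/\ p \in [pchar k], (#|G|`_p^' %| #|k|.-1)%N,
        lam 1 = 1 /\ {in [pred a | a != 0] &, {morph lam : a b / a * b}},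
        {in [pred a | a != 0] &, injective lam} &
        forall x, x \in G -> p_elt (p^')%N x -> chi x = brauer_val lam rG x].

(* eps d is an integer-valued class function of G, given by its value
   eps d C on each conjugacy class C; eps_d(x) = eps d (x ^: G). *)
Definition V4_expr (G : {group gT}) (n : nat) (eps : nat -> {set gT} -> int)
    (chi : gT -> algC) (z : algC) (l : int) : algC :=
  n%:R^-1 * \sum_(C in classes G) \sum_(d <- divisors n)
     (eps d C)%:~R * cycloTr (n %/ d) (chi (repr C) * (z ^+ d) ^ (- l)).

Definition VPA (G : {group gT}) (n : nat) (eps : nat -> {set gT} -> int) : Prop :=
  [/\ forall d, (d %| n)%N -> \sum_(C in classes G) eps d C = 1,
      forall d, (d %| n)%N -> d != n -> eps d (1%g ^: G)%g = 0,
      forall d C, (d %| n)%N -> C \in classes G ->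
                  ~~ (#[repr C]%g %| n %/ d)%N -> eps d C = 0 &
      forall z : algC, n.-primitive_root z -> forall l : int,
        (forall chi : 'CF(G), chi \is a character ->
           V4_expr G n eps (fun x => chi x) z l \in Num.nat) /\
        (forall (p : nat) (chi : gT -> algC), prime p -> ~~ (p %| n)%N ->
           is_brauer_char G p chi -> V4_expr G n eps chi z l \in Num.nat)].

Definition acc_vpa (G : {group gT}) (eps : nat -> {set gT} -> int) (d m : nat) : int :=
  \sum_(C in classes G | #[repr C]%g == m) eps d C.

End Brauer.

(* Main.v *)
Require Import Defs.
From HB Require Import structures.
From mathcomp Require Import all_boot all_order all_algebra all_fingroup all_solvable all_field all_character.
From mathcomp Require Import ring.
Import Order.TTheory GRing.Theory Num.Theory.
Local Open Scope ring_scope.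
Local Open Scope group_scope.
Local Open Scope ring_scope.
Lemma ind_val (gT : finGroupType) (G P : {group gT}) x :
  P \subset G -> x \in G ->
  'Ind[G, P] 1 x = (#|rcosets P G :&: afix (@rcoset_action _) [set x]|)%:R.
Proof.
move=> sPG Gx.
rewrite cfIndE //.
rewrite (reindex_inj invg_inj) /=.
rewrite (eq_bigl (fun y => y \in G)) => [|y]; last by rewrite groupV.
have pP := rcosets_partition sPG.
rewrite -{1}(cover_partition pP).
case/and3P: pP => _ tiP _.
rewrite big_trivIset //.
rewrite (eq_bigr (fun B => #|P|%:R * (B \in afix (@rcoset_action _) [set x])%:R)); last first.
  move=> B /rcosetsP[h Gh ->].
  rewrite (eq_bigr (fun _ => ((P :* h \in afix (@rcoset_action _) [set x])%:R))); last first.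
    move=> g /rcosetP[p Pp ->].
    rewrite cfun1E; congr (_%:R).
    rewrite (sameP afix1P eqP) /= rcosetE -rcosetM.
    rewrite (sameP eqP rcoset_eqP) mem_rcoset invMg conjgM groupJr ?groupV //.
    by rewrite conjgE invgK mulgA.
  by rewrite sumr_const card_rcoset mulr_natl.
rewrite -big_distrr /= mulrA mulVf ?neq0CG // mul1r -sum1_card natr_sum.
rewrite big_mkcond [RHS]big_mkcond /=; apply: eq_bigr => B _.
by rewrite [in RHS]inE; case: (B \in rcosets P G) => /=; case: (B \in afix (@rcoset_action _) [set x]).
Qed.

Lemma ind_val_t (gT : finGroupType) (G P : {group gT}) t x :
  t.-Sylow(G) P -> x \in G -> t.-elt x ->
  (#|rcosets P G :&: afix (@rcoset_action _) [set x]| = #|G : P| %[mod t])%N.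
Proof.
move=> sylP Gx tx.
have sPG := pHall_sub sylP.
have := @pgroup_fix_mod _ _ _ (@rcoset_action gT) t <[x]> (rcosets P G) tx.
rewrite afix_cycle => -> //.
apply: subset_trans (actsRs_rcosets P G); by rewrite cycle_subG.
Qed.

Lemma ind_val_nt (gT : finGroupType) (G P : {group gT}) t x :
  t.-Sylow(G) P -> ~~ t.-elt x -> 'Ind[G, P] 1 x = 0.
Proof.
move=> sylP ntx; have sPG := pHall_sub sylP.
rewrite cfIndE // big1 ?mulr0 // => y _.
rewrite cfun1E; case Pxy: ((x ^ y)%g \in P) => //.
by move: ntx; rewrite -(p_eltJ _ x y) (mem_p_elt (pHall_pgroup sylP) Pxy).
Qed.
Lemma Qn_autE k m w : coprime k m -> w ^+ m = 1 -> Qn_aut k m w = w ^+ k.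
Proof.
move=> co wm; rewrite /Qn_aut.
move: (erefl (coprime k m)).
case: {2 3}(coprime k m) => e.
  by case: (Qn_aut_exists e) => u /= ->.
by rewrite co in e.
Qed.


Lemma cycloTrE m (c : nat) w : w ^+ m = 1 ->
  cycloTr m (c%:R * w) = c%:R * \sum_(k < m | coprime k m) w ^+ k.
Proof.
move=> wm; rewrite /cycloTr big_distrr; apply: eq_bigr => k co.
by rewrite rmorphM rmorph_nat Qn_autE.
Qed.

Lemma geom0 {m} {v : algC} : v ^+ m = 1 -> v != 1 -> \sum_(i < m) v ^+ i = 0.
Proof.
move=> vm v1; have := subrX1 v m; rewrite vm subrr => /esym/eqP.
by rewrite mulf_eq0 subr_eq0 (negPf v1) /= => /eqP.
Qed.

Lemma prime_sum t (w : algC) : prime t -> w ^+ t = 1 -> w != 1 ->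
  \sum_(k < t | coprime k t) w ^+ k = -1.
Proof.
move=> pt wt w1; have t0 := prime_gt0 pt.
have := geom0 wt w1; rewrite (bigID (fun k : 'I_t => coprime k t)) /=.
rewrite [X in _ + X](big_pred1 (Ordinal t0)) => [/eqP|k] /=.
  by rewrite expr0 addr_eq0 => /eqP.
rewrite coprime_sym prime_coprime // negbK; apply/idP/eqP => [|->].
  move=> /dvdn_leq H; apply/val_inj => /=; case: (posnP k) => // k0.
  by have := H k0; rewrite leqNgt ltn_ord.
by rewrite dvdn0.
Qed.

Lemma sum_mult p m (f : nat -> algC) : (0 < p)%N ->
  \sum_(k < p * m | (p %| k)%N) f k = \sum_(j < m) f (p * j)%N.
Proof.
move=> p0; rewrite -(big_mkord (fun k => (p %| k)%N) f).
rewrite -(big_mkord xpredT (fun j => f (p * j)%N)).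
elim: m => [|m IH]; first by rewrite muln0 !big_geq.
rewrite big_nat_recr //= -IH mulnS addnC (big_cat_nat (leq0n _) (leq_addr _ _)) /=.
congr (_ + _).
rewrite -{1}(add0n (p * m)%N) big_addn addKn.
rewrite (big_ltn_cond p0) /= add0n dvdn_mulr // big1_seq ?addr0 // => i /andP[pi].
rewrite mem_iota => /andP[i1 ip].
move: pi; rewrite dvdn_addl ?dvdn_mulr // => pi.
have := dvdn_leq i1 pi; move: ip; rewrite add1n subn1 prednK // => ip.
by rewrite leqNgt ip.
Qed.

Lemma sum_cop r t (f : nat -> algC) : prime r -> prime t -> r != t ->
  \sum_(k < r * t | coprime k (r * t)) f k =
  \sum_(k < r * t) f k - \sum_(k < r * t | (r %| k)%N) f k
     - \sum_(k < r * t | (t %| k)%N) f k + f 0%N.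
Proof.
move=> pr pt rt.
have n0 : (0 < r * t)%N by rewrite muln_gt0 !prime_gt0.
have -> : f 0%N = \sum_(k < r * t | val k == 0%N) f k.
  by rewrite (big_pred1 (Ordinal n0)).
rewrite (big_mkcond (fun k : 'I__ => coprime k _)) (big_mkcond (fun k : 'I__ => (r %| k)%N)).
rewrite (big_mkcond (fun k : 'I__ => (t %| k)%N)) (big_mkcond (fun k : 'I__ => val k == 0%N)).
rewrite -!sumrB -big_split /=; apply: eq_bigr => k _.
have cort : coprime r t by rewrite prime_coprime // dvdn_prime2.
have -> : (val k == 0%N) = (r %| k)%N && (t %| k)%N.
  rewrite -Gauss_dvd //; apply/eqP/idP => [->|]; first by rewrite dvdn0.
  case: (posnP k) => // k0 /(dvdn_leq k0); by rewrite leqNgt ltn_ord.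
rewrite coprimeMr ![coprime k _]coprime_sym !prime_coprime //.
by case: (r %| k)%N; case: (t %| k)%N => /=; rewrite ?subr0 ?add0r ?addr0 ?subrr ?sub0r ?subrK // addrC subrr.
Qed.

Lemma Ydiff r t (u : algC) : prime r -> prime t -> r != t ->
  (forall i, (u ^+ i == 1) = (r * t %| i)%N) ->
  \sum_(k < r * t | coprime k (r * t)) u ^+ k
  - \sum_(k < r * t | coprime k (r * t)) (u ^+ r) ^+ k = r%:R.
Proof.
move=> pr pt rt ord.
have r0 := prime_gt0 pr; have t0 := prime_gt0 pt.
have ue : u ^+ (r * t) = 1 by apply/eqP; rewrite ord.
have smt (f : nat -> algC) : \sum_(k < r * t | (t %| k)%N) f k = \sum_(j < r) f (t * j)%N.
  by rewrite mulnC sum_mult.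
have unit (i : nat) : (u ^+ i) ^+ (r * t) = 1.
  by rewrite -exprM mulnC exprM ue expr1n.
rewrite !sum_cop // !smt !sum_mult //.
have g0 i : ~~ (r * t %| i)%N -> \sum_(k < r * t) (u ^+ i) ^+ k = 0.
  by move=> H; apply: geom0; [apply: unit | rewrite ord].
have pr1 := prime_gt1 pr; have pt1 := prime_gt1 pt.
have n1 : ~~ (r * t %| 1)%N by rewrite dvdn1 muln_eq1 (gtn_eqF pr1).
have nr : ~~ (r * t %| r)%N by rewrite -{2}(muln1 r) dvdn_pmul2l // dvdn1 (gtn_eqF pt1).
have nt : ~~ (r * t %| t)%N by rewrite mulnC -{2}(muln1 t) dvdn_pmul2l // dvdn1 (gtn_eqF pr1).
have nrr : ~~ (r * t %| r * r)%N by rewrite dvdn_pmul2l // dvdn_prime2 // eq_sym.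
rewrite -{1 2}[u]expr1 !g0 //.
have e3 a b j : (u ^+ a) ^+ (b * j) = (u ^+ (a * b)) ^+ j by rewrite -!exprM mulnA.
have g1 i m : (u ^+ i) ^+ m = 1 -> ~~ (r * t %| i)%N -> \sum_(j < m) (u ^+ i) ^+ j = 0.
  by move=> H1 H2; apply: geom0 => //; rewrite ord.
have e4 i : (u ^+ i) ^+ 0 = 1 by rewrite expr0.
have -> : \sum_(j < t) u ^+ 1 ^+ (r * j) = 0.
  under eq_bigr do rewrite e3 mul1n.
  by apply: g1 => //; rewrite -exprM ue.
have -> : \sum_(j < r) u ^+ (t * j) = 0.
  under eq_bigr do rewrite exprM.
  by apply: g1 => //; rewrite -exprM mulnC ue.
have -> : \sum_(j < t) u ^+ r ^+ (r * j) = 0.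
  under eq_bigr do rewrite e3.
  by apply: g1 => //; rewrite -exprM -mulnA (mulnC r t) mulnA exprM ue expr1n.
have -> : \sum_(j < r) u ^+ r ^+ (t * j) = r%:R.
  under eq_bigr do rewrite e3 ue expr1n.
  by rewrite sumr_const card_ord.
rewrite expr0 e4; ring.
Qed.

Lemma div4 r t d : prime r -> prime t -> (d %| r * t)%N ->
  [\/ d = 1%N, d = r, d = t | d = (r * t)%N].
Proof.
move=> pr pt dn; case rd: (r %| d)%N.
  case/dvdnP: rd => k dk; move: dn; rewrite dk (mulnC k r) dvdn_pmul2l ?prime_gt0 //.
  case/primeP: pt => _ /[apply] /orP[] /eqP ->; first by rewrite muln1; constructor 2.
  by constructor 4.
have cdr : coprime d r by rewrite coprime_sym prime_coprime // rd.
move: dn; rewrite Gauss_dvdr //.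
by case/primeP: pt => _ /[apply] /orP[] /eqP ->; [constructor 1 | constructor 3].
Qed.

Lemma main_t (gT : finGroupType) (G : {group gT}) r t (eps : nat -> {set gT} -> int) :
  prime r -> prime t -> r != t -> VPA G (r * t) eps ->
  (t%:Z %| acc_vpa G eps 1 t)%Z.
Proof.
move=> pr pt rt [V1 V2 V3 V4].
have n0 : (0 < r * t)%N by rewrite muln_gt0 !prime_gt0.
have [P sylP] := Sylow_exists t G.
have sPG := pHall_sub sylP.
pose pi : 'CF(G) := 'Ind[G, P] 1.
have pich : pi \is a character by rewrite cfInd_char ?cfun1_char.
have [z pz] := C_prim_root_exists n0.
pose NC (C : {set gT}) := #|rcosets P G :&: afix (@rcoset_action _) [set repr C]|.
have piC C : C \in classes G -> pi (repr C) = (NC C)%:R.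
  by move=> /repr_classesP[GC _]; rewrite /pi ind_val.
have ordC C : C \in classes G -> forall d, (d %| r * t)%N -> eps d C != 0 ->
    (#[repr C] %| (r * t) %/ d)%N /\ (d != (r * t)%N -> #[repr C] != 1%N).
  move=> CG d dn e0; split; first by apply: contraR e0 => H; rewrite V3.
  move=> dnn; apply: contra e0 => /eqP o1.
  have r1 : repr C = 1%g by apply/eqP; rewrite -order_eq1 o1.
  by move: (CG) => /repr_classesP[_ defC]; rewrite defC r1 V2.
have piNT C : C \in classes G -> ~~ t.-elt (repr C) -> NC C = 0%N.
  move=> CG nt; have := piC C CG; rewrite /pi (ind_val_nt _ _ _ _ _ sylP nt).
  by move=> /esym/eqP; rewrite pnatr_eq0 => /eqP.
have V := V4 z pz.
have [m1 Em1] : exists m, V4_expr G (r * t) eps (fun x => pi x) z 1 = m%:R.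
  by apply/natrP; case: (V 1) => /(_ pi pich).
have [mr Emr] : exists m, V4_expr G (r * t) eps (fun x => pi x) z r%:Z = m%:R.
  by apply/natrP; case: (V r%:Z) => /(_ pi pich).
have key : ((r * t)%N%:R : algC) * (m1%:R - mr%:R) =
    r%:R * \sum_(C in classes G) (eps 1%N C)%:~R * (NC C)%:R.
  rewrite mulrBr -Em1 -Emr /V4_expr !mulrA !mulfV ?pnatr_eq0 -?lt0n // !mul1r -sumrB.
  rewrite big_distrr; apply: eq_bigr => C CG /=.
  rewrite -sumrB.
  rewrite (big_rem 1%N) ?dvdn_divisors ?dvd1n //=.
  rewrite [X in _ + X](_ : _ = 0) ?addr0; last first.
    apply: big1_seq => d /andP[_].
    rewrite mem_rem_uniq ?divisors_uniq // inE => /andP[d1].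
    rewrite -dvdn_divisors // => dn; rewrite -mulrBr.
    have zn : z ^+ (r * t)%N = 1 := prim_expr_order pz.
    have zo i : (z ^+ i == 1) = ((r * t)%N %| i)%N by rewrite (prim_order_dvd pz).
    case: (div4 _ _ _ pr pt dn) => dE; subst d.
    - by [].
    - rewrite mulKn ?prime_gt0 // piC // exprN1 -exprnN.
      have w1 : ((z ^+ r)^-1) ^+ t = 1.
        by rewrite exprVn -exprM (prim_expr_order pz) invr1.
      have w2 : ((z ^+ r) ^+ r)^-1 ^+ t = 1.
        by rewrite exprVn -!exprM mulnAC exprM zn expr1n invr1.
      rewrite !cycloTrE // !prime_sum // ?subrr ?mulr0 // invr_eq1 -?exprM zo.
        by rewrite dvdn_pmul2l ?prime_gt0 // dvdn_prime2 // eq_sym.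
      by rewrite -{2}(muln1 r) dvdn_pmul2l ?prime_gt0 // dvdn1 gtn_eqF ?prime_gt1.
    - case e0: (eps t C == 0); first by rewrite (eqP e0) mul0r.
      have [od o1] := ordC C CG t dn (negbT e0).
      have tn : t != (r * t)%N.
        by rewrite -{1}(mul1n t) eqn_pmul2r ?prime_gt0 // eq_sym gtn_eqF ?prime_gt1.
      have {}o1 := o1 tn.
      move: od; rewrite mulnK ?prime_gt0 // => od.
      have or : #[repr C]%g = r.
        by case/primeP: pr => _ /(_ _ od) /orP[] /eqP // H; rewrite H in o1.
      rewrite piC // piNT //; last first.
        by rewrite /p_elt or pnatE // inE.
      by rewrite !mul0r /cycloTr !big1 ?subrr ?mulr0 // => k _; rewrite rmorph0.
    - by rewrite zn !exp1rz subrr mulr0.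
  have zn : z ^+ (r * t)%N = 1 := prim_expr_order pz.
  have uo i : ((z^-1) ^+ i == 1) = ((r * t)%N %| i)%N.
    by rewrite exprVn invr_eq1 (prim_order_dvd pz).
  have un i : ((z^-1) ^+ i) ^+ (r * t)%N = 1.
    by rewrite -exprM mulnC exprM exprVn zn invr1 expr1n.
  rewrite -mulrBr divn1 piC // expr1 exprN1 -exprnN -exprVn.
  rewrite cycloTrE; last by rewrite -[z^-1]expr1 un.
  rewrite cycloTrE ?un // -mulrBr Ydiff //.
  by rewrite mulrA mulrC.
  by rewrite -dvdn_divisors.
pose S : int := \sum_(C in classes G) eps 1%N C * (NC C)%:Z.
have tS : (t%:Z %| S)%Z.
  have : ((r%:Z * S)%:~R : algC) = ((r%:Z * (t%:Z * (m1%:Z - mr%:Z)))%:~R).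
    rewrite !intrM intrB rmorph_sum /= -!pmulrn mulrA -natrM key.
    by congr (_ * _); apply: eq_bigr => C _; rewrite intrM -pmulrn.
  move/intr_inj/mulfI; rewrite eqz_nat gtn_eqF ?prime_gt0 // => /(_ isT) ->.
  by rewrite dvdz_mulr.
have n1 : 1%N != (r * t)%N.
  by rewrite eq_sym muln_eq1 negb_and gtn_eqF ?prime_gt1.
have dS : (t%:Z %| S - #|G : P|%:Z * acc_vpa G eps 1 t)%Z.
  rewrite /acc_vpa big_distrr /= big_mkcondr /S -sumrB /=.
  apply: rpred_sum => C CG.
  case e0: (eps 1%N C == 0).
    by rewrite (eqP e0) mul0r; case: ifP; rewrite ?mulr0 subrr ?rpred0.
  have [od o1] := ordC C CG 1%N (dvd1n _) (negbT e0).
  rewrite divn1 in od; have {}o1 := o1 n1.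
  have GC : repr C \in G by case/repr_classesP: CG.
  case: (div4 _ _ _ pr pt od) => oE.
  - by rewrite oE in o1.
  - have nt : ~~ t.-elt (repr C) by rewrite /p_elt oE pnatE // inE.
    by rewrite piNT // oE (negbTE rt) mulr0 subr0 rpred0.
  - have tt : t.-elt (repr C) by rewrite /p_elt oE pnatE // inE.
    have := ind_val_t _ _ _ _ _ sylP GC tt => /eqP Hm.
    rewrite oE eqxx (mulrC #|G : P|%:Z) -mulrBr; apply: dvdz_mull.
    by rewrite -eqz_mod_dvd !modz_nat (eqP Hm).
  - have nt : ~~ t.-elt (repr C).
      by rewrite /p_elt oE pnatM !pnatE // !inE (negbTE rt).
    have ne : (r * t)%N != t.
      by rewrite -{2}(mul1n t) eqn_pmul2r ?prime_gt0 // gtn_eqF ?prime_gt1.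
    by rewrite piNT // oE (negbTE ne) mulr0 subr0 rpred0.
have h : (t%:Z %| #|G : P|%:Z * acc_vpa G eps 1 t)%Z.
  rewrite (_ : _ * _ = S - (S - #|G : P|%:Z * acc_vpa G eps 1 t)); last first.
    by rewrite opprB addrC subrK.
  exact: rpredB.
have cop : coprimez t%:Z #|G : P|%:Z.
  rewrite coprimezE /= prime_coprime // -p'natE //.
  by case/and3P: sylP.
by rewrite Gauss_dvdzr in h.
Qed.

Close Scope ring_scope.
Close Scope group_scope.

Theorem lemma4p5 (F : finFieldType) (r t : nat)
    (eps : nat -> {set PSL2_type F} -> int) :
  odd #|F| -> prime r -> prime t -> r != t ->
  (2 * (r * t) %| #|F| - 1) || (2 * (r * t) %| #|F| + 1) ->
  VPA (PSL2 F) (r * t) eps ->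
  (t%:Z %| acc_vpa (PSL2 F) eps 1 t)%Z /\ (r%:Z %| acc_vpa (PSL2 F) eps 1 r)%Z.
Proof.
move=> _ pr pt rt _ HV; split; first exact: (@main_t _ _ r t eps pr pt rt HV).
apply: (@main_t _ _ t r eps pt pr); first by rewrite eq_sym.
by rewrite (mulnC t r).
Qed.
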